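(* Let $\mathsf V$ and $\mathsf W$ be cyclically reduced linear words. The function $\mathsf s_{\mathsf V,\mathsf W}:I(\mathsf V,\mathsf W)\to\{1,-1,0\}$ is constant on each equivalence class of $\mathcal R(\mathsf V,\mathsf W)$.
   Context: Fix an alphabet $\mathbb A_q=\{a_1,\dots,a_q,\bar a_1,\dots,\bar a_q\}$ with a fixed linear order and $\bar{\bar v}=v$. A linear word $\mathsf V=v_0\cdots v_{n-1}$ is a non-empty finite sequence of letters; subscripts are read modulo the length. $\bar{\mathsf V}=\bar v_{n-1}\cdots\bar v_0$. $\mathsf V$ is cyclically reduced if $v_i\ne\bar v_{i+1}$ for all $i$ (indices mod $n$). $\mathsf V_j=v_jv_{j+1}\cdots v_{n-1}v_0\cdots v_{j-1}$. For cyclically reduced $\mathsf V=v_0\cdots v_{n-1}$, $\mathsf W=w_0\cdots w_{m-1}$, $I(\mathsf V,\mathsf W)=\{(j,k):0\le j<n,\,0\le k<m\}$ (entries mod $n$, mod $m$) and $\mathcal R(\mathsf V,\mathsf W)$ is the equivalence relation generated by $(j,k)\sim(j+1,k+1)$ whenever $v_j=w_k$, and $(j+1,k)\sim(j,k+1)$ whenever $v_j=\bar w_k$. For reduced half-infinite words $\mathsf T=t_0t_1\cdots$, $\mathsf U=u_0u_1\cdots$, $\mathsf T<\mathsf U$ if $t_0<u_0$, or if for some $j\ge0$, $t_i=u_i$ for $0\le i\le j$ and $t_{j+1}$ precedes $u_{j+1}$ in the order obtained by cyclically permuting the order of $\mathbb A_q$ so that $\bar t_j$ is first. $\mathsf V^{\infty}=\mathsf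 V\mathsf V\cdots$, $\mathsf V^{-\infty}=\bar{\mathsf V}\bar{\mathsf V}\cdots$ (so $\mathsf V_i^{\pm\infty}=(\mathsf V_i)^{\pm\infty}$). A 4-tuple of half-infinite words is cyclically ordered if some cyclic permutation of it is strictly increasing. $\mathsf s_{\mathsf V,\mathsf W}(i,j)=1$ if $(\mathsf V_i^\infty,\mathsf W_j^\infty,\mathsf V_i^{-\infty},\mathsf W_j^{-\infty})$ is cyclically ordered, $-1$ if $(\mathsf V_i^\infty,\mathsf W_j^{-\infty},\mathsf V_i^{-\infty},\mathsf W_j^{\infty})$ is cyclically ordered, and $0$ otherwise. *)

(* Defs.v *)
From HB Require Import structures.
From mathcomp Require Import all_boot all_order all_algebra.
From Stdlib Require Import Relations ClassicalEpsilon.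
Set Implicit Arguments. Unset Strict Implicit. Unset Printing Implicit Defensive.
Import Order.TTheory GRing.Theory Num.Theory.

(* Alphabet A_q = {a_1..a_q, bar a_1..bar a_q}: letter (i, false) is a_(i+1),
   (i, true) is bar a_(i+1). *)
Definition letter (q : nat) := ('I_q * bool)%type.
Definition bar {q} (x : letter q) : letter q := (x.1, ~~ x.2).

Record lword (q : nat) := LWord { lw_hd : letter q; lw_tl : seq (letter q) }.
Definition lw_seq {q} (w : lword q) : seq (letter q) := lw_hd w :: lw_tl w.
Definition lw_len {q} (w : lword q) : nat := (size (lw_tl w)).+1.
Definition lw_at {q} (w : lword q) (j : nat) : letter q :=
  nth (lw_hd w) (lw_seq w) (j %% lw_len w).

Definition cyc_reduced {q} (w : lword q) : Prop :=
  forall i, i < lw_len w -> lw_at w i <> bar (lw_at w i.+1).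

Definition hword (q : nat) := nat -> letter q.
Definition pinf {q} (w : lword q) (i : nat) : hword q := fun k => lw_at w (i + k).
(* V_i^{-infty} = bar(V_i) bar(V_i) ... ; bar(V_i) = bar v_{i+n-1} ... bar v_i *)
Definition ninf {q} (w : lword q) (i : nat) : hword q :=
  fun k => bar (lw_at w (i + (lw_len w - 1 - k %% lw_len w))).

(* The fixed linear order on A_q is given by an injective rank r : x < y iff r x < r y.
   cprec r c x y : x precedes y in the order obtained by cyclically permuting
   the order so that c is first. *)
Definition cprec {q} (r : letter q -> nat) (c x y : letter q) : bool :=
  if (r c <= r x) == (r c <= r y) then r x < r y else r c <= r x.

Definition hlt {q} (r : letter q -> nat) (T U : hword q) : Prop :=
  r (T 0) < r (U 0) \/
  exists j, (forall i, i <= j -> T i = U i) /\ cprec r (bar (T j)) (T j.+1) (U j.+1).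

Definition cyc_ord4 {q} (r : letter q -> nat) (a b c d : hword q) : Prop :=
  (hlt r a b /\ hlt r b c /\ hlt r c d) \/
  (hlt r b c /\ hlt r c d /\ hlt r d a) \/
  (hlt r c d /\ hlt r d a /\ hlt r a b) \/
  (hlt r d a /\ hlt r a b /\ hlt r b c).

Definition sVW {q} (r : letter q -> nat) (V W : lword q) (i j : nat) : int :=
  if excluded_middle_informative
       (cyc_ord4 r (pinf V i) (pinf W j) (ninf V i) (ninf W j)) then 1%R
  else if excluded_middle_informative
       (cyc_ord4 r (pinf V i) (ninf W j) (ninf V i) (pinf W j)) then (-1)%R
  else 0%R.

Definition Iidx {q} (V W : lword q) := ('I_(lw_len V) * 'I_(lw_len W))%type.

Definition Rstep {q} (V W : lword q) (p p' : Iidx V W) : Prop :=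
  exists (j : 'I_(lw_len V)) (k : 'I_(lw_len W)),
    (lw_at V j = lw_at W k /\
     val p.1 = val j /\ val p.2 = val k /\
     val p'.1 = j.+1 %% lw_len V /\ val p'.2 = k.+1 %% lw_len W) \/
    (lw_at V j = bar (lw_at W k) /\
     val p.1 = j.+1 %% lw_len V /\ val p.2 = val k /\
     val p'.1 = val j /\ val p'.2 = k.+1 %% lw_len W).

Definition Rrel {q} (V W : lword q) : relation (Iidx V W) :=
  clos_refl_sym_trans (Iidx V W) (@Rstep q V W).
Arguments Rrel {q} V W _ _.
Arguments Rstep {q} V W _ _.
Arguments sVW {q} r V W i j.

(* Main.v *)
Require Import Defs.
From HB Require Import structures.
From mathcomp Require Import all_boot all_order all_algebra.
From Stdlib Require Import Relations ClassicalEpsilon FunctionalExtensionality PropExtensionality.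
Set Implicit Arguments. Unset Strict Implicit. Unset Printing Implicit Defensive.

Definition hcons {q} (x : letter q) (X : hword q) : hword q :=
  fun k => if k is k'.+1 then X k' else x.
Definition htail {q} (X : hword q) : hword q := fun k => X k.+1.

Lemma barK q (x : letter q) : bar (bar x) = x.
Proof. by case: x => a b; rewrite /bar /= negbK. Qed.

Lemma cprecxx q (r : letter q -> nat) c x : cprec r c x x = false.
Proof. by rewrite /cprec eqxx ltnn. Qed.

Definition Ehl {q} (r : letter q -> nat) (T U : hword q) : Prop :=
  exists j, (forall i, i <= j -> T i = U i) /\ cprec r (bar (T j)) (T j.+1) (U j.+1).

Lemma Ehl_head q r (T U : hword q) : Ehl r T U -> T 0 = U 0.
Proof. by case=> j [H _]; apply: H. Qed.

Lemma hlt_diff q r (T U : hword q) : T 0 <> U 0 -> (hlt r T U <-> r (T 0) < r (U 0)).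
Proof.
move=> ne; split; last by left.
case=> // h; exfalso; apply: ne; exact: (@Ehl_head q r T U h).
Qed.

Lemma hlt_same q r (T U : hword q) : T 0 = U 0 -> (hlt r T U <-> Ehl r T U).
Proof.
move=> e; split; last by right.
by case=> //; rewrite e ltnn.
Qed.

Lemma hlt_cons q r (x : letter q) T U :
  hlt r (hcons x T) (hcons x U) <-> (cprec r (bar x) (T 0) (U 0) \/ Ehl r T U).
Proof.
split.
- case; first by rewrite /= ltnn.
  case=> [[|j]] [H1 H2]; first by left; exact H2.
  right; exists j; split => // i hi; exact: (H1 i.+1 hi).
- case=> [h|[j [H1 H2]]]; right.
  + exists 0; split => // -[|i] // hi.
  + exists j.+1; split => // -[|i] hi //=; exact: H1.
Qed.

Lemma hlt_cons_same q r (x : letter q) T U : T 0 = U 0 ->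
  (hlt r (hcons x T) (hcons x U) <-> hlt r T U).
Proof.
move=> e; apply: iff_trans (hlt_cons _ _ _ _) _.
apply: iff_trans _ (iff_sym (hlt_same r e)).
rewrite e cprecxx; split; [by case | by right].
Qed.

Lemma hlt_cons_diff q r (x : letter q) T U : T 0 <> U 0 ->
  (hlt r (hcons x T) (hcons x U) <-> cprec r (bar x) (T 0) (U 0)).
Proof.
move=> ne; apply: iff_trans (hlt_cons _ _ _ _) _.
split; [case=> // h; exfalso; exact: ne (Ehl_head h) | by left].
Qed.

Definition KP (b1 b2 : bool) (N O : Prop) : Prop :=
  if b1 == b2 then (N <-> O) else if b1 then N /\ ~ O else ~ N /\ O.
Lemma KP_iff b1 b2 (N N' O O' : Prop) : (N <-> N') -> (O <-> O') -> KP b1 b2 N' O' -> KP b1 b2 N O.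
Proof. by rewrite /KP; case: b1; case: b2 => /=; tauto. Qed.
Lemma KP_id b1 b2 : KP b1 b2 b1 b2.
Proof. by case: b1; case: b2; rewrite /KP /=. Qed.
Lemma KP_neg b1 b2 : KP b1 b2 (~~ b2) (~~ b1).
Proof. by case: b1; case: b2; rewrite /KP /=. Qed.

Lemma KP_eq b1 b2 N O : KP b1 b2 N O ->
  if b1 == b2 then N = O else if b1 then N = True /\ O = False else N = False /\ O = True.
Proof.
rewrite /KP; case: (b1 == b2); first by move=> h; apply: propositional_extensionality.
case: b1 => -[h1 h2]; split; apply: propositional_extensionality; tauto.
Qed.
Lemma rot4 (X : Type) (O N : X -> X -> Prop) (B : X -> bool) (a b c d : X) :
  KP (B a) (B b) (N a b) (O a b) -> KP (B b) (B c) (N b c) (O b c) ->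
  KP (B c) (B d) (N c d) (O c d) -> KP (B d) (B a) (N d a) (O d a) ->
  (((O a b /\ O b c /\ O c d) \/ (O b c /\ O c d /\ O d a) \/
    (O c d /\ O d a /\ O a b) \/ (O d a /\ O a b /\ O b c)) <->
   ((N a b /\ N b c /\ N c d) \/ (N b c /\ N c d /\ N d a) \/
    (N c d /\ N d a /\ N a b) \/ (N d a /\ N a b /\ N b c))).
Proof.
move=> /KP_eq h1 /KP_eq h2 /KP_eq h3 /KP_eq h4.
move: h1 h2 h3 h4.
case: (B a); case: (B b); case: (B c); case: (B d) => /=;
 repeat (let h := fresh in move=> h; try (case: h => -> ->); try rewrite h); tauto.
Qed.

Lemma ltn_flip x y : x != y -> (x < y) = ~~ (y < x).
Proof. by move=> h; rewrite -leqNgt ltn_neqAle h. Qed.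

Lemma natA x y c : x != c -> y != c -> x != y ->
  KP (x < c) (y < c) (x < y) (if (c <= x) == (c <= y) then x < y else c <= x).
Proof.
move=> hxc hyc hxy.
have t1 : x < c -> ~~ (y < c) -> x < y.
  by move=> h1 h2; rewrite -leqNgt in h2; exact: leq_trans h1 h2.
have t2 : ~~ (x < c) -> y < c -> ~~ (x < y).
  by move=> h1 h2; rewrite -leqNgt in h1; rewrite -leqNgt; exact: ltnW (leq_trans h2 h1).
rewrite (leqNgt c x) (leqNgt c y); move: t1 t2.
case: (x < c); case: (y < c); case: (x < y); rewrite /KP /= => t1 t2;
  first [done | by have [] := t1 isT isT | by have [] := t2 isT isT | by split].
Qed.

Lemma natB x y c : x != c -> y != c -> x != y ->
  KP (c < x) (c < y) (if (c <= x) == (c <= y) then x < y else c <= x) (x < y).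
Proof.
move=> hxc hyc hxy.
have t1 : x < c -> ~~ (y < c) -> x < y.
  by move=> h1 h2; rewrite -leqNgt in h2; exact: leq_trans h1 h2.
have t2 : ~~ (x < c) -> y < c -> ~~ (x < y).
  by move=> h1 h2; rewrite -leqNgt in h1; rewrite -leqNgt; exact: ltnW (leq_trans h2 h1).
have e1 : (c < x) = ~~ (x < c) by apply: ltn_flip; rewrite eq_sym.
have e2 : (c < y) = ~~ (y < c) by apply: ltn_flip; rewrite eq_sym.
rewrite e1 e2 (leqNgt c x) (leqNgt c y); move: t1 t2.
case: (x < c); case: (y < c); case: (x < y); rewrite /KP /= => t1 t2;
  first [done | by have [] := t1 isT isT | by have [] := t2 isT isT | by split].
Qed.



Definition phi {q} (a : letter q) (s : hword q) : hword q :=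
  if s 0 == a then htail s else hcons (bar a) s.
Definition Bf {q} (r : letter q -> nat) (a : letter q) (s : hword q) : bool :=
  if s 0 == a then r (s 1) < r (bar a) else r a < r (s 0).
Definition good {q} (a : letter q) (s : hword q) : Prop := s 0 = a -> s 1 <> bar a.

Lemma hcons_tail q (s : hword q) : s = hcons (s 0) (htail s).
Proof. by apply: functional_extensionality => -[|k]. Qed.

Lemma phi_hit q (a : letter q) X : phi a (hcons a X) = X.
Proof. by rewrite /phi /= eqxx. Qed.
Lemma phi_miss q (a : letter q) s : s 0 <> a -> phi a s = hcons (bar a) s.
Proof. by rewrite /phi; case: eqP. Qed.
Lemma Bf_hit q r (a : letter q) X : Bf r a (hcons a X) = (r (X 0) < r (bar a)).
Proof. by rewrite /Bf /= eqxx. Qed.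
Lemma Bf_miss q r (a : letter q) s : s 0 <> a -> Bf r a s = (r a < r (s 0)).
Proof. by rewrite /Bf; case: eqP. Qed.

Lemma rne q (r : letter q -> nat) (rinj : injective r) (x y : letter q) : x <> y -> r x != r y.
Proof. by move=> ne; apply/eqP => /rinj. Qed.

Lemma key q r (rinj : injective r) (a : letter q) (s t : hword q) :
  good a s -> good a t ->
  KP (Bf r a s) (Bf r a t) (hlt r (phi a s) (phi a t)) (hlt r s t).
Proof.
move=> gs gt.
have nba : a <> bar a by case: a {gs gt} => i b; rewrite /bar => -[]; case: b.
case: (eqVneq (s 0) a) => hs; case: (eqVneq (t 0) a) => ht.
- have hX : htail s 0 <> bar a := gs hs; have hY := gt ht.
  have -> : s = hcons a (htail s) by rewrite {1}(hcons_tail s) hs.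
  have -> : t = hcons a (htail t) by rewrite {1}(hcons_tail t) ht.
  move: hX hY; set X := htail s; set Y := htail t => hX hY.
  rewrite !phi_hit !Bf_hit.
  case: (eqVneq (X 0) (Y 0)) => hXY.
  + rewrite hXY /KP eqxx; exact: iff_sym (hlt_cons_same r a hXY).
  + have hXY' : X 0 <> Y 0 by apply/eqP.
    apply: (KP_iff (hlt_diff r hXY') (hlt_cons_diff r a hXY')).
    by apply: natA; apply: rne.
- have hX : htail s 0 <> bar a := gs hs; have ht' : t 0 <> a by apply/eqP.
  have -> : s = hcons a (htail s) by rewrite {1}(hcons_tail s) hs.
  move: hX; set X := htail s => hX.
  rewrite phi_hit Bf_hit (phi_miss ht') (Bf_miss r ht').
  apply: (KP_iff (hlt_diff r (T := X) (U := hcons (bar a) t) hX)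
                 (hlt_diff r (T := hcons a X) (U := t) (fun e => ht' (esym e)))).
  exact: KP_id.
- have hY : htail t 0 <> bar a := gt ht; have hs' : s 0 <> a by apply/eqP.
  have -> : t = hcons a (htail t) by rewrite {1}(hcons_tail t) ht.
  move: hY; set Y := htail t => hY.
  rewrite phi_hit Bf_hit (phi_miss hs') (Bf_miss r hs').
  apply: (KP_iff (hlt_diff r (T := hcons (bar a) s) (U := Y) (fun e => hY (esym e)))
                 (hlt_diff r (T := s) (U := hcons a Y) hs')).
  rewrite /= (ltn_flip (rne rinj (fun e => hY (esym e)))).
  rewrite (ltn_flip (rne rinj hs')).
  exact: KP_neg.
- have hs' : s 0 <> a by apply/eqP.
  have ht' : t 0 <> a by apply/eqP.
  rewrite (phi_miss hs') (phi_miss ht') (Bf_miss r hs') (Bf_miss r ht').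
  case: (eqVneq (s 0) (t 0)) => hst.
  + rewrite hst /KP eqxx; exact: (hlt_cons_same r (bar a) hst).
  + have hst' : s 0 <> t 0 by apply/eqP.
    apply: (KP_iff (hlt_cons_diff r (bar a) hst') (hlt_diff r hst')).
    rewrite barK; apply: natB; by apply: rne.
Qed.



Lemma transl q r (rinj : injective r) (a : letter q) (s1 s2 s3 s4 : hword q) :
  good a s1 -> good a s2 -> good a s3 -> good a s4 ->
  (cyc_ord4 r s1 s2 s3 s4 <-> cyc_ord4 r (phi a s1) (phi a s2) (phi a s3) (phi a s4)).
Proof.
move=> g1 g2 g3 g4.
exact: (@rot4 _ (hlt r) (fun s t => hlt r (phi a s) (phi a t)) (Bf r a) _ _ _ _
   (key rinj g1 g2) (key rinj g2 g3) (key rinj g3 g4) (key rinj g4 g1)).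
Qed.

Definition sVWf {q} r (A B C D : hword q) : int :=
  if excluded_middle_informative (cyc_ord4 r A B C D) then 1%R
  else if excluded_middle_informative (cyc_ord4 r A D C B) then (-1)%R else 0%R.

Lemma sVWf_transl q r (rinj : injective r) (a : letter q) (A B C D : hword q) :
  good a A -> good a B -> good a C -> good a D ->
  sVWf r A B C D = sVWf r (phi a A) (phi a B) (phi a C) (phi a D).
Proof.
move=> gA gB gC gD.
have h1 := transl rinj gA gB gC gD.
have h2 := transl rinj gA gD gC gB.
rewrite /sVWf (propositional_extensionality _ _ h1) (propositional_extensionality _ _ h2).
by [].
Qed.

Lemma lw_at_modD q (w : lword q) i t : lw_at w (i %% lw_len w + t) = lw_at w (i + t).
Proof. by rewrite /lw_at modnDml. Qed.
Lemma lw_at_mod q (w : lword q) i : lw_at w (i %% lw_len w) = lw_at w i.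
Proof. by rewrite /lw_at modn_mod. Qed.
Lemma lw_at_addn q (w : lword q) i : lw_at w (i + lw_len w) = lw_at w i.
Proof. by rewrite /lw_at modnDr. Qed.

Lemma ninf_alt q (w : lword q) i k :
  ninf w i k = bar (lw_at w (i + size (lw_tl w) * k.+1)).
Proof.
rewrite /ninf; congr bar; rewrite /lw_at; congr nth.
apply/eqP; rewrite eqn_modDl.
rewrite /lw_len; set m := size (lw_tl w).
rewrite subn1 /=.
rewrite -(eqn_modDr (k %% m.+1).+1).
have hk : k %% m.+1 <= m by rewrite -ltnS ltn_pmod.
rewrite addnS subnK // modnn.
have E : m * k.+1 + (k %% m.+1).+1 = (m * k.+1 + 1) + k %% m.+1
  by rewrite addnS addn1 addSn.
rewrite E modnDmr -addnA add1n addnC -mulSn modnMr.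
by [].
Qed.

Lemma pinf_cons q (w : lword q) i : pinf w i = hcons (lw_at w i) (pinf w i.+1).
Proof.
apply: functional_extensionality => -[|t]; rewrite /pinf /=; first by rewrite addn0.
by rewrite addSnnS.
Qed.

Lemma ninf_cons q (w : lword q) i : ninf w i.+1 = hcons (bar (lw_at w i)) (ninf w i).
Proof.
apply: functional_extensionality => -[|t] /=; rewrite !ninf_alt.
  by rewrite muln1 addSnnS lw_at_addn.
congr bar; rewrite -(lw_at_addn w (i + _)); congr lw_at.
rewrite /lw_len mulnS addSn addnS -addnA (addnC (size _ * _)).
by [].
Qed.

Lemma pinf_mod q (w : lword q) i : pinf w (i %% lw_len w) = pinf w i.
Proof. by apply: functional_extensionality => t; rewrite /pinf lw_at_modD. Qed.
Lemma ninf_mod q (w : lword q) i : ninf w (i %% lw_len w) = ninf w i.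
Proof. by apply: functional_extensionality => t; rewrite /ninf lw_at_modD. Qed.

Lemma red_all q (w : lword q) : cyc_reduced w -> forall i, lw_at w i <> bar (lw_at w i.+1).
Proof.
move=> H i.
have := H (i %% lw_len w) (ltn_pmod _ (ltn0Sn _)).
by rewrite lw_at_mod -addn1 lw_at_modD addn1.
Qed.

Lemma red2 q (w : lword q) : cyc_reduced w -> forall i, lw_at w i.+1 <> bar (lw_at w i).
Proof. move=> H i e; have := red_all H (i:=i); rewrite e barK; by []. Qed.

Lemma ninf0 q (w : lword q) i : ninf w i 0 = bar (lw_at w (i + size (lw_tl w))).
Proof. by rewrite ninf_alt muln1. Qed.

Lemma ninf0_ne q (w : lword q) : cyc_reduced w -> forall i, ninf w i 0 <> lw_at w i.
Proof.
move=> H i; rewrite ninf0 => e.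
apply: (red_all H (i:=i + size (lw_tl w))).
by rewrite -addnS -[(size _).+1]/(lw_len w) lw_at_addn -e barK.
Qed.



Lemma good_hit q (a : letter q) X : X 0 <> bar a -> good a (hcons a X).
Proof. by move=> h _. Qed.
Lemma good_miss q (a : letter q) s : s 0 <> a -> good a s.
Proof. by move=> h e; case: (h e). Qed.
Lemma pinf0 q (w : lword q) i : pinf w i 0 = lw_at w i.
Proof. by rewrite /pinf addn0. Qed.

Lemma step1 q r (rinj : injective r) (V W : lword q) j k :
  cyc_reduced V -> cyc_reduced W -> lw_at V j = lw_at W k ->
  sVWf r (pinf V j) (pinf W k) (ninf V j) (ninf W k) =
  sVWf r (pinf V j.+1) (pinf W k.+1) (ninf V j.+1) (ninf W k.+1).
Proof.
move=> HV HW Ha.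
rewrite (pinf_cons V j) (pinf_cons W k) (ninf_cons V j) (ninf_cons W k) -Ha.
set a := lw_at V j.
have gA : pinf V j.+1 0 <> bar a by rewrite pinf0; exact: red2 HV j.
have gB : pinf W k.+1 0 <> bar a by rewrite /a Ha pinf0; exact: red2 HW k.
have gC : ninf V j 0 <> a by exact: ninf0_ne HV j.
have gD : ninf W k 0 <> a by rewrite /a Ha; exact: ninf0_ne HW k.
rewrite (sVWf_transl rinj (good_hit gA) (good_hit gB) (good_miss gC) (good_miss gD)).
by rewrite !phi_hit (phi_miss gC) (phi_miss gD).
Qed.

Lemma step2 q r (rinj : injective r) (V W : lword q) j k :
  cyc_reduced V -> cyc_reduced W -> lw_at V j = bar (lw_at W k) ->
  sVWf r (pinf V j.+1) (pinf W k) (ninf V j.+1) (ninf W k) =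
  sVWf r (pinf V j) (pinf W k.+1) (ninf V j) (ninf W k.+1).
Proof.
move=> HV HW Ha.
have gC : ninf V j 0 <> bar (lw_at W k) by rewrite -Ha; exact: ninf0_ne HV j.
have gA : pinf V j.+1 0 <> lw_at W k.
  by rewrite pinf0 -(barK (lw_at W k)) -Ha; exact: red2 HV j.
rewrite (pinf_cons W k) (ninf_cons V j) (pinf_cons V j) (ninf_cons W k) Ha barK.
set a := lw_at W k.
have gB : pinf W k.+1 0 <> bar a by rewrite pinf0; exact: red2 HW k.
have gD : ninf W k 0 <> a by exact: ninf0_ne HW k.
rewrite (sVWf_transl rinj (good_miss gA) (good_hit gB) (good_hit gC) (good_miss gD)).
by rewrite !phi_hit (phi_miss gA) (phi_miss gD).
Qed.

Theorem lemma2p7 (q : nat) (r : letter q -> nat) (r_inj : injective r)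
  (V W : lword q) :
  cyc_reduced V -> cyc_reduced W ->
  forall p p' : Iidx V W, Rrel V W p p' ->
  sVW r V W p.1 p.2 = sVW r V W p'.1 p'.2.
Proof.
move=> HV HW p p' HR.
elim: HR => [x y st | x | x y _ IH | x y z _ IH1 _ IH2];
  [ | done | by rewrite IH | by rewrite IH1 IH2].
change (sVWf r (pinf V x.1) (pinf W x.2) (ninf V x.1) (ninf W x.2) =
        sVWf r (pinf V y.1) (pinf W y.2) (ninf V y.1) (ninf W y.2)).
case: st => j0 [k0 [[Ha [e1 [e2 [e3 e4]]]] | [Ha [e1 [e2 [e3 e4]]]]]].
- have E1 : nat_of_ord x.1 = j0 := e1.
  have E2 : nat_of_ord x.2 = k0 := e2.
  have E3 : nat_of_ord y.1 = j0.+1 %% lw_len V := e3.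
  have E4 : nat_of_ord y.2 = k0.+1 %% lw_len W := e4.
  rewrite E1 E2 E3 E4 !pinf_mod !ninf_mod; exact: step1.
- have E1 : nat_of_ord x.1 = j0.+1 %% lw_len V := e1.
  have E2 : nat_of_ord x.2 = k0 := e2.
  have E3 : nat_of_ord y.1 = j0 := e3.
  have E4 : nat_of_ord y.2 = k0.+1 %% lw_len W := e4.
  rewrite E1 E2 E3 E4 !pinf_mod !ninf_mod; exact: step2.
Qed.
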